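(* Let $(X,b)$ be a weighted graph and $V\colon X\to\mathbb R$. If $q_V$ is nonnegative, then for every $h\in C_c(X)$ with $q_V(h)=0$ the set $\{x\in X\mid h(x)\neq0\}$ is a union of connected components of $(X,b)$. In particular, if all connected components of $(X,b)$ are infinite, every such $h$ vanishes identically.
   Context: Weighted graph: $X$ countable, $b\colon X\times X\to[0,\infty)$ with $b(x,x)=0$, $b(x,y)=b(y,x)$, $\sum_y b(x,y)<\infty$ for all $x$. Connected components are equivalence classes of ''connected by a finite path $x_1,\dots,x_n$ with $b(x_i,x_{i+1})>0$''. $C_c(X)$ is the set of finitely supported complex functions on $X$. $q_V(f)=\frac12\sum_{x,y}b(x,y)|f(x)-f(y)|^2+\sum_x|f(x)|^2V(x)$ for $f\in C_c(X)$; $q_V$ is nonnegative if $q_V(f)\ge0$ for all $f\in C_c(X)$. *)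

(* Defs.v *)
From HB Require Import structures.
From mathcomp Require Import all_boot all_order all_algebra.
From mathcomp Require Import all_classical all_reals all_analysis.
From mathcomp Require Export complex.
Set Implicit Arguments. Unset Strict Implicit. Unset Printing Implicit Defensive.
Import Order.TTheory GRing.Theory Num.Theory.
Local Open Scope classical_set_scope.
Local Open Scope ring_scope.

Definition weighted_graph (R : realType) (X : countType) (b : X -> X -> R) : Prop :=
  [/\ (forall x, b x x = 0),
      (forall x y, b x y = b y x),
      (forall x y, 0 <= b x y) &
      (forall x, (\esum_(y in [set: X]) (b x y)%:E < +oo)%E)].

Definition supp (R : realType) (X : Type) (f : X -> R[i]) : set X :=
  [set x | f x != 0].

Definition Cc (R : realType) (X : Type) (f : X -> R[i]) : Prop :=
  finite_set (supp f).

(* The first (nonnegative) sum is an unordered sum over X*X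
   with values in the extended reals (it is finite by summability of the rows);
   the second is a finite sum over the support of f. *)
Definition qV (R : realType) (X : countType) (b : X -> X -> R) (V : X -> R)
    (f : X -> R[i]) : \bar R :=
  ((\esum_(p in [set: X * X]) (2^-1 * b p.1 p.2 * ComplexField.Normc.normc (f p.1 - f p.2) ^+ 2)%:E)
   + (\sum_(x \in supp f) ComplexField.Normc.normc (f x) ^+ 2 * V x)%:E)%E.

Definition qV_nonneg (R : realType) (X : countType) (b : X -> X -> R) (V : X -> R) : Prop :=
  forall f : X -> R[i], Cc f -> (0 <= qV b V f)%E.

Definition gconnected (R : realType) (X : countType) (b : X -> X -> R) (x y : X) : Prop :=
  exists s : seq X, path (fun u v => 0 < b u v) x s /\ last x s = y.

Definition component (R : realType) (X : countType) (b : X -> X -> R) (x : X) : set X :=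
  [set y | gconnected b x y].

Definition union_of_components (R : realType) (X : countType) (b : X -> X -> R)
    (S : set X) : Prop :=
  exists I : set X, S = \bigcup_(x in I) component b x.

(* Main.v *)
Require Import Defs.
From HB Require Import structures.
From mathcomp Require Import all_boot all_order all_algebra.
From mathcomp Require Import all_classical all_reals all_analysis.
From mathcomp Require Import complex.
From mathcomp Require Import ring lra.
Import Order.TTheory GRing.Theory Num.Theory.
Local Open Scope classical_set_scope.
Local Open Scope ring_scope.
Local Open Scope complex_scope.

Local Notation nc := ComplexField.Normc.normc.

Section Aux.
Variable R : realType.

Lemma nc_ge0 (z : R[i]) : 0 <= nc z.
Proof. by case: z => a b; rewrite /= sqrtr_ge0. Qed.

Lemma nc_real (r : R) : nc (r%:C) = `|r|.
Proof. by rewrite /= expr0n /= addr0 sqrtr_sqr. Qed.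

Lemma nc_real2 (r : R) : nc (r%:C) ^+ 2 = r ^+ 2.
Proof. by rewrite nc_real real_normK // num_real. Qed.

Lemma nc_eq0 (z : R[i]) : (nc z == 0) = (z == 0).
Proof.
apply/eqP/eqP => [/ComplexField.Normc.eq0_normc //|->].
exact: ComplexField.Normc.normc0.
Qed.

Lemma rC_eq0 (r : R) : (r%:C == 0) = (r == 0).
Proof. by apply/eqP/eqP => [[]|->]. Qed.

Lemma nh_eq0 (z : R[i]) : ((nc z)%:C == 0) = (z == 0).
Proof. by rewrite rC_eq0 nc_eq0. Qed.

Lemma nc_rev (u v : R[i]) : (nc u - nc v) ^+ 2 <= nc (u - v) ^+ 2.
Proof.
have h1 : nc u <= nc (u - v) + nc v.
  by rewrite -[X in nc X <= _](subrK v) le_normcD.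
have h2 : nc v <= nc (u - v) + nc u.
  by rewrite -(normcN (u - v)) opprB -[X in nc X <= _](subrK u) le_normcD.
have := nc_ge0 (u - v); nra.
Qed.

Local Open Scope ereal_scope.

Lemma esum_scale (T : choiceType) (S : set T) (a : T -> R) (k : R) :
  (0 <= k)%R -> (forall i, 0 <= a i)%R ->
  \esum_(i in S) (k * a i)%:E <= k%:E * \esum_(i in S) (a i)%:E.
Proof.
move=> k0 a0; apply: ge_ereal_sup => _ [A [finA AS] <-].
rewrite fsumEFin // -mulr_fsumr EFinM -fsumEFin //.
apply: lee_wpmul2l; first by rewrite lee_fin.
by apply: ereal_sup_ubound; exists A.
Qed.

Lemma esum_fst (X : choiceType) (y : X) (F : X * X -> \bar R) :
  (forall p, p.1 != y -> F p = 0) ->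
  \esum_(p in [set: X * X]) F p = \esum_(z in [set: X]) F (y, z).
Proof.
move=> F0.
rewrite (_ : \esum_(p in [set: X * X]) F p = \esum_(p in [set p | p.1 = y]) F p).
  rewrite (_ : [set p | p.1 = y] = (pair y) @` [set: X]).
    by rewrite esum_image // => a b _ _ [].
  apply/seteqP; split => [[a c] /= ->|_ [z _ <-]] //; by exists c.
rewrite [RHS]esum_mkcond; apply: eq_esum => p _.
case: ifPn => // /negP; rewrite inE => /eqP ?; by rewrite F0 //; apply/eqP.
Qed.

Lemma esum_snd (X : choiceType) (y : X) (F : X * X -> \bar R) :
  (forall p, p.2 != y -> F p = 0) ->
  \esum_(p in [set: X * X]) F p = \esum_(z in [set: X]) F (z, y).
Proof.
move=> F0.
rewrite (_ : \esum_(p in [set: X * X]) F p = \esum_(p in [set p | p.2 = y]) F p).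
  rewrite (_ : [set p | p.2 = y] = (fun z => (z, y)) @` [set: X]).
    by rewrite esum_image // => a b _ _ [].
  apply/seteqP; split => [[a c] /= ->|_ [z _ <-]] //; by exists a.
rewrite [RHS]esum_mkcond; apply: eq_esum => p _.
case: ifPn => // /negP; rewrite inE => /eqP ?; by rewrite F0 //; apply/eqP.
Qed.
Local Close Scope ereal_scope.
Lemma key (X : countType) (b : X -> X -> R) (V : X -> R) :
  weighted_graph b -> qV_nonneg b V ->
  forall h : X -> R[i], Cc h -> qV b V h = 0%E ->
  forall x y, h x != 0 -> (0 < b x y)%R -> h y != 0.
Proof.
move=> [b0 bsym bge0 bfin] nn h Ch qh0 x y hx bxy; apply/negP => /eqP hy0.
have xy : x != y by apply: contraNneq hx => ->; rewrite hy0.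
pose nh z := nc (h z).
have nh0 z : (0 <= nh z)%R by exact: nc_ge0.
have nhx : (0 < nh x)%R by rewrite lt_def nh0 andbT /nh nc_eq0.
pose term (f : X -> R[i]) (p : X * X) :=
  ((2^-1 * b p.1 p.2 * nc (f p.1 - f p.2) ^+ 2)%R)%:E.
have term0 f p : (0 <= term f p)%E.
  rewrite lee_fin; apply: mulr_ge0; last exact: sqr_ge0.
  by apply: mulr_ge0; rewrite ?invr_ge0 ?ler0n.
pose Eh := \esum_(p in [set: X * X]) term h p.
pose Vh := (\sum_(z \in supp h) nc (h z) ^+ 2 * V z)%R.
have EhE : Eh = (- Vh)%:E.
  have : (Eh + Vh%:E = 0)%E by exact: qh0.
  by move=> e; rewrite -(addeK Eh (x:=Vh%:E)) // e add0e EFinN.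
have Dfin := bfin y.
have D0 : (0%E <= \esum_(z in [set: X]) (b y z)%:E)%E by apply: esum_ge0 => z _; rewrite lee_fin.
pose D := fine (\esum_(z in [set: X]) (b y z)%:E).
have DE : \esum_(z in [set: X]) (b y z)%:E = D%:E by rewrite fineK // ge0_fin_numE.
have D0' : (0 <= D)%R by exact: fine_ge0.
pose S0 := (b y x * nh x)%R.
have S0pos : (0 < S0)%R by rewrite mulr_gt0 // -bsym.
pose K := (D + `|V y| + 1)%R.
have Kpos : (0 < K)%R by rewrite /K; have := normr_ge0 (V y); lra.
pose t := (S0 / (2 * K))%R.
have tpos : (0 < t)%R by rewrite /t divr_gt0 // mulr_gt0.
have tK : (t * K = S0 / 2)%R by rewrite /t; field; rewrite gt_eqF.
pose f z := (if z == y then t else nh z)%:C.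
have suppf : supp f = [set y] `|` supp h.
  apply/seteqP; split => z; rewrite /supp /f /=.
    case: (eqVneq z y) => [-> _|zy]; first by left.
    by rewrite /nh nh_eq0 => ?; right.
  case: (eqVneq z y) => [->|zy]; first by move=> _; rewrite rC_eq0 (gt_eqF tpos).
  move=> [/eqP|hz]; first by rewrite (negbTE zy).
  by rewrite /nh nh_eq0.
have fy : f y = t%:C by rewrite /f eqxx.
have fz z : z != y -> f z = (nh z)%:C by move=> zy; rewrite /f (negbTE zy).
have Cf : Cc f by rewrite /Cc suppf finite_setU; split; [exact: finite_set1|exact: Ch].
have qf := nn f Cf.

pose Ef := \esum_(p in [set: X * X]) term f p.
have VfE : (\sum_(z \in supp f) nc (f z) ^+ 2 * V z = Vh + t ^+ 2 * V y)%R.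
  rewrite suppf fsbigU0 ?finite_set1 //; last first.
    by move=> z [/= -> ]; rewrite /supp /= hy0 eqxx.
  rewrite fsbig_set1 /f eqxx nc_real2 addrC; congr (_ + _)%R.
  apply: eq_fsbigr => z; rewrite inE => hz.
  have zy : z != y by apply: contraNneq hz => ->; rewrite /supp /= hy0 eqxx.
  by rewrite (negbTE zy) nc_real2.
have qfE : qV b V f = (Ef + (Vh + t ^+ 2 * V y)%:E)%E by rewrite /qV VfE.
have yx : y != x by rewrite eq_sym.
pose c (p : X * X) := ((if p == (y, x) then t * S0 else 0)%R)%:E.
pose d1 (p : X * X) := ((if p.1 == y then 2^-1 * t ^+ 2 * b p.1 p.2 else 0)%R)%:E.
pose d2 (p : X * X) := ((if p.2 == y then 2^-1 * t ^+ 2 * b p.1 p.2 else 0)%R)%:E.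
have tS0 : (0 <= t * S0)%R by rewrite mulr_ge0 // ltW.
have c0 p : (0 <= c p)%E by rewrite /c lee_fin; case: ifP.
have k0 : (0 <= 2^-1 * t ^+ 2)%R by rewrite mulr_ge0 ?invr_ge0 ?ler0n ?sqr_ge0.
have d10 p : (0 <= d1 p)%E by rewrite /d1 lee_fin; case: ifP => // _; rewrite mulr_ge0.
have d20 p : (0 <= d2 p)%E by rewrite /d2 lee_fin; case: ifP => // _; rewrite mulr_ge0.
clearbody f.
have pw p : (term f p + c p <= term h p + (d1 p + d2 p))%E.
  case: p => p1 p2; rewrite /term /c /d1 /d2 /= xpair_eqE -!EFinD lee_fin.
  have [->|n1] := eqVneq p1 y; have [->|n2] := eqVneq p2 y.
  - by rewrite /= (negbTE yx) b0 !(mulr0, mul0r, addr0).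
  - rewrite fy (fz _ n2) hy0 sub0r normcN -rmorphB nc_real2.
    have [->|nzx] := eqVneq p2 x.
      rewrite /= /S0 /nh; lra.
    rewrite /=.
    have := mulr_ge0 (mulr_ge0 (bge0 y p2) (ltW tpos)) (nh0 p2).
    rewrite /= /nh; lra.
  - rewrite fy (fz _ n1) hy0 subr0 -rmorphB nc_real2.
    have := mulr_ge0 (mulr_ge0 (bge0 p1 y) (ltW tpos)) (nh0 p1).
    rewrite /= /nh; lra.
  - rewrite (fz _ n1) (fz _ n2) -rmorphB nc_real2.
    have bb : (0 <= 2^-1 * b p1 p2)%R by rewrite mulr_ge0 ?invr_ge0 ?ler0n.
    have := ler_wpM2l bb (nc_rev (h p1) (h p2)).
    rewrite /= /nh; lra.
have L : (Ef + (t * S0)%:E <= Eh + (t ^+ 2 * D)%:E)%E.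
  apply: (@le_trans _ _ (Ef + \esum_(p in [set: X * X]) c p)%E).
    apply: leeD2l; apply: esum_ge; exists [set (y, x)].
      by split; [exact: finite_set1|].
    by rewrite fsbig_set1 /c eqxx.
  rewrite -esumD; [|by move=> p _; exact: term0|by move=> p _; exact: c0].
  apply: le_trans (le_esum (fun p _ => pw p)) _.
  rewrite esumD; [|by move=> p _; exact: term0|by move=> p _; rewrite adde_ge0].
  rewrite esumD; [|by move=> p _; exact: d10|by move=> p _; exact: d20].
  apply: leeD2l.
  rewrite (@esum_fst _ y d1); last by move=> p /negbTE; rewrite /d1 => ->.
  rewrite (@esum_snd _ y d2); last by move=> p /negbTE; rewrite /d2 => ->.
  rewrite (eq_esum (b := fun z => ((2^-1 * t ^+ 2) * b y z)%R%:E)); last first.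
    by move=> z _; rewrite /d1 /= eqxx.
  rewrite [X in (_ + X)%E](eq_esum (b := fun z => ((2^-1 * t ^+ 2) * b y z)%R%:E)); last first.
    by move=> z _; rewrite /d2 /= eqxx bsym.
  apply: le_trans (leeD (@esum_scale _ [set: X] _ _ k0 (bge0 y)) (@esum_scale _ [set: X] _ _ k0 (bge0 y))) _.
  rewrite DE -!EFinM -EFinD lee_fin; lra.
have Ef0 : (0 <= Ef)%E by apply: esum_ge0 => p _; exact: term0.
rewrite qfE EhE in qf L.
clearbody Ef; clear qfE.
move: Ef Ef0 qf L => [e| |] //= e0 qf L.
  rewrite -!EFinD !lee_fin in qf L e0.
  have h1 : (t ^+ 2 * V y <= t ^+ 2 * `|V y|)%R by rewrite ler_wpM2l ?sqr_ge0 ?ler_norm.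
  have h2 : (t ^+ 2 * K = t * S0 / 2)%R by rewrite expr2 -mulrA tK mulrA.
  have h3 : (t ^+ 2 * K = t ^+ 2 * D + t ^+ 2 * `|V y| + t ^+ 2)%R by rewrite /K; ring.
  have h4 : (0 < t * S0)%R by rewrite mulr_gt0.
  have h5 : (0 <= t ^+ 2)%R by rewrite sqr_ge0.
  move: qf L h1 h2 h3 h4 h5; clear -tpos; lra.
Qed.
End Aux.

Local Close Scope complex_scope.

Theorem lemma4p4 (R : realType) (X : countType) (b : X -> X -> R) (V : X -> R) :
  weighted_graph b ->
  qV_nonneg b V ->
  forall h : X -> R[i], Cc h -> qV b V h = 0%E ->
    union_of_components b (supp h) /\
    ((forall x : X, infinite_set (component b x)) -> forall x : X, h x = 0).
Proof.
move=> wg nn h Ch qh0.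
have Hp : forall s x, h x != 0 -> path (fun u v => 0 < b u v) x s -> h (last x s) != 0.
  elim=> [|z s IH] x hx //= /andP[bxz pth].
  exact: IH z (@key _ _ _ _ wg nn h Ch qh0 x z hx bxz) pth.
have Hc : forall x, h x != 0 -> component b x `<=` supp h.
  by move=> x hx y [s [pth <-]]; exact: Hp.
split.
  exists (supp h); apply/seteqP; split.
    by move=> x hx; exists x => //; exists [::].
  by move=> y [x hx hy]; exact: (Hc x hx).
move=> Hinf x; apply/eqP; apply: contraT => hx.
by have := Hinf x; case; apply: sub_finite_set (Hc x hx) Ch.
Qed.
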